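(* Let $G$ be a finite group. There exists a (non-unique) map of operads $\mathcal{SM}_{\varnothing}\to\varepsilon^*\mathscr{P}$, and any such map is a levelwise $(G\times\Sigma_\bullet)$-equivalence: for every $n$ and every subgroup $\Lambda\subseteq G\times\Sigma_n$, the induced functor on $\Lambda$-fixed subcategories is an equivalence of categories.
   Context: For a set $X$, $\widetilde X$ is the chaotic category on $X$ (exactly one morphism between any two objects), applied levelwise to operads. $\mathcal{SM}_\varnothing=\widetilde{\mathbb{F}(S)}$ where $\mathbb{F}$ is the free operad functor on symmetric sequences of $G$-sets and $S=(G\times\Sigma_0)/(G\times1)\sqcup(G\times\Sigma_2)/(G\times1)$ (this is the operad $\mathcal{SM}_{\mathbf{O}(\underline{\mathrm{triv}})}$ associated to the minimal indexing system, which has no nontrivial orbits). $\mathscr{P}=\widetilde{\Sigma_\bullet}$ is the nonequivariant permutativity (Barratt–Eccles) operad, the chaotification of the associative operad $\Sigma_\bullet$ with $\Sigma_n$ acting by left multiplication, and $\varepsilon^*\mathscr{P}$ is $\mathscr{P}$ with trivial $G$-action. *)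

(* Defs.v *)
From HB Require Import structures.
From mathcomp Require Import all_boot all_order all_fingroup.
From mathcomp Require Import gproduct.

Set Implicit Arguments.
Unset Strict Implicit.
Unset Printing Implicit Defensive.


Record category := Category {
  ob :> Type;
  hom : ob -> ob -> Type;
  idc : forall x, hom x x;
  compc : forall x y z, hom y z -> hom x y -> hom x z;
  compc_idl : forall x y (f : hom x y), compc (idc y) f = f;
  compc_idr : forall x y (f : hom x y), compc f (idc x) = f;
  compc_assoc : forall x y z w (f : hom z w) (g : hom y z) (h : hom x y),
      compc f (compc g h) = compc (compc f g) h }.
Arguments compc {c x y z}.
Arguments idc {c}.

Record functor (C D : category) := Functor {
  fobj :> C -> D;
  fmap : forall x y, hom x y -> hom (fobj x) (fobj y);
  fmap_id : forall x, fmap (idc x) = idc (fobj x);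
  fmap_comp : forall x y z (f : hom y z) (g : hom x y),
      fmap (compc f g) = compc (fmap f) (fmap g) }.
Arguments fmap {C D} _ {x y}.

Definition fid (C : category) : functor C C :=
  @Functor C C (fun x => x) (fun x y f => f) (fun x => erefl) (fun x y z f g => erefl).

Definition fcomp (C D E : category) (G : functor D E) (F : functor C D)
  : functor C E.
Proof.
refine (@Functor C E (fun x => G (F x)) (fun x y f => fmap G (fmap F f)) _ _).
- by move=> x; rewrite !fmap_id.
- by move=> x y z f g; rewrite !fmap_comp.
Defined.

Definition nat_iso (C D : category) (F G : functor C D) : Prop :=
  exists (eta : forall x, hom (F x) (G x)) (inv : forall x, hom (G x) (F x)),
    [/\ forall x, compc (inv x) (eta x) = idc (F x),
        forall x, compc (eta x) (inv x) = idc (G x) &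
        forall x y (f : hom x y), compc (fmap G f) (eta x) = compc (eta y) (fmap F f)].

Definition is_equivalence (C D : category) (F : functor C D) : Prop :=
  exists G : functor D C, nat_iso (fcomp G F) (fid C) /\ nat_iso (fcomp F G) (fid D).

Definition chaotic (X : Type) : category.
Proof.
refine (@Category X (fun _ _ => unit) (fun _ => tt) (fun _ _ _ _ _ => tt) _ _ _).
- by move=> x y [].
- by move=> x y [].
- by [].
Defined.

Definition chaotic_functor (X Y : Type) (f : X -> Y) : functor (chaotic X) (chaotic Y) :=
  @Functor (chaotic X) (chaotic Y) f (fun _ _ _ => tt) (fun _ => erefl) (fun _ _ _ _ _ => erefl).

(* Structure of a symmetric operad in G-sets: a right Sigma_n action, a
   G action, the unit, and the partial compositions x o_i y (plugging y
   into the input i of x). *)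
Record goperad (G : finGroupType) := GOperad {
  op : nat -> Type;
  sact : forall n, op n -> 'S_n -> op n;
  gact : forall n, G -> op n -> op n;
  ounit : op 1;
  ocomp : forall n m, op n -> 'I_n -> op m -> op (n.-1 + m) }.
Arguments sact {G} _ {n}.
Arguments gact {G} _ {n}.
Arguments ocomp {G} _ {n m}.

Definition gsact (G : finGroupType) (O : goperad G) n (l : G * 'S_n) (x : op O n) :=
  gact O l.1 (sact O x (l.2)^-1%g).

Arguments gsact {G} O {n} l x.

Definition is_fixed (G : finGroupType) (O : goperad G) n
    (L : {set G * 'S_n}) (x : op O n) : Prop :=
  forall l, l \in L -> gsact O l x = x.

Arguments is_fixed {G} O {n} L x.

Definition fixed_pts (G : finGroupType) (O : goperad G) n (L : {set G * 'S_n}) :=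
  {x : op O n | is_fixed O L x}.

(* The
   (G x Sigma_n)-action on morphisms and the composition on morphisms are
   forced (unique morphisms), so the Lambda-fixed subcategory of the
   chaotic category on O(n) is the chaotic category on the Lambda-fixed
   objects. *)
Definition fixed_subcat (G : finGroupType) (O : goperad G) n (L : {set G * 'S_n})
  : category := chaotic (fixed_pts O L).

(* Compatibility on
   morphisms is automatic in a chaotic target, so only the object-level
   conditions remain. *)
Record opmap (G : finGroupType) (O1 O2 : goperad G) := OpMap {
  opm : forall n, functor (chaotic (op O1 n)) (chaotic (op O2 n));
  opm_sact : forall n (x : op O1 n) s, opm n (sact O1 x s) = sact O2 (opm n x) s;
  opm_gact : forall n g (x : op O1 n), opm n (gact O1 g x) = gact O2 g (opm n x);
  opm_unit : opm 1 (ounit O1) = ounit O2;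
  opm_comp : forall n m (x : op O1 n) (i : 'I_n) (y : op O1 m),
      opm (n.-1 + m) (ocomp O1 x i y) = ocomp O2 (opm n x) i (opm m y) }.

Lemma opmap_fixed (G : finGroupType) (O1 O2 : goperad G) (F : opmap O1 O2) n
   (L : {set G * 'S_n}) (x : op O1 n) :
  is_fixed O1 L x -> is_fixed O2 L (opm F n x).
Proof.
move=> fx l /fx e; rewrite /gsact -opm_sact -opm_gact.
by rewrite /gsact in e; rewrite e.
Qed.

Definition fixed_functor (G : finGroupType) (O1 O2 : goperad G) (F : opmap O1 O2) n
   (L : {set G * 'S_n}) : functor (fixed_subcat O1 L) (fixed_subcat O2 L) :=
  chaotic_functor (X := fixed_pts O1 L) (Y := fixed_pts O2 L)
    (fun x => exist _ (opm F n (proj1_sig x)) (opmap_fixed F (proj2_sig x))).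

(* s in Sigma_n is read as the word s(0) s(1) ... s(n-1) (a linear order
   of the inputs).  Partial composition w o_i v substitutes the word v
   (shifted by i) for the letter i of w, shifting the letters > i of w by
   (m - 1).  Below, p is the position of the letter i in w. *)
Definition word_comp_fun n m (w : 'S_n) (i : 'I_n) (v : 'S_m) (q : nat) : nat :=
  let p := nat_of_ord ((w^-1)%g i) in
  let W := fun k : nat => if insub k is Some k' then nat_of_ord (w k') else 0 in
  let V := fun k : nat => if insub k is Some k' then nat_of_ord (v k') else 0 in
  let adj := fun a => if a < i then a else (a + m - 1)%N in
  if q < p then adj (W q)
  else if q < p + m then i + V (q - p)
  else adj (W (q + 1 - m)%N).

Definition word_comp n m (w : 'S_n) (i : 'I_n) (v : 'S_m) : 'S_(n.-1 + m) :=
  insubd (1%g : 'S_(n.-1 + m))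
    ([ffun q : 'I_(n.-1 + m) => insubd q (word_comp_fun w i v q)]
       : {ffun 'I_(n.-1 + m) -> 'I_(n.-1 + m)}).

(* Sigma_n acts on Sigma_n by (the paper's) left multiplication, i.e.
   relabelling of the letters; in MathComp's convention for products of
   permutations this is t |-> t * s. *)
Definition perm_sact n (t : 'S_n) (s : 'S_n) : 'S_n := (t * s)%g.

(* eps^* P : the associative operad Sigma_bullet with trivial G-action;
   its chaotification is the Barratt-Eccles operad. *)
Definition assoc_op (G : finGroupType) : goperad G :=
  @GOperad G (fun n => 'S_n) perm_sact (fun n _ x => x) 1%g (@word_comp).

(* S has one point in arity 0 (G x Sigma_0 / G x 1) and a free Sigma_2-
   orbit in arity 2 ((G x Sigma_2)/(G x 1) = Sigma_2), with trivial G-action.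
   Hence F(S)(n) = planar trees built from a nullary node (Stump) and a
   binary node, with n input leaves, together with a labelling of the leaves
   by a permutation in Sigma_n; G acts trivially. *)
Inductive tree := Leaf | Stump | Node of tree & tree.

Fixpoint leaves (t : tree) : nat :=
  match t with Leaf => 1 | Stump => 0 | Node l r => leaves l + leaves r end.

Fixpoint graft (t : tree) (p : nat) (u : tree) : tree :=
  match t with
  | Leaf => if p == 0 then u else Leaf
  | Stump => Stump
  | Node l r => if p < leaves l then Node (graft l p u) r
                else Node l (graft r (p - leaves l) u)
  end.

Fixpoint comb (k : nat) : tree :=
  match k with 0 => Stump | k'.+1 => Node Leaf (comb k') end.

Lemma leaves_comb k : leaves (comb k) = k.
Proof. by elim: k => //= k ->. Qed.

Definition ntree n := {t : tree | leaves t == n}.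

Definition comb_n n : ntree n := exist _ (comb n) (introT eqP (leaves_comb n)).

Definition free_el n := (ntree n * 'S_n)%type.

Definition free_sact n (x : free_el n) (s : 'S_n) : free_el n := (x.1, (x.2 * s)%g).

Definition free_unit : free_el 1 := (exist _ Leaf (eqxx 1%N), 1%g).

Definition free_comp n m (x : free_el n) (i : 'I_n) (y : free_el m) : free_el (n.-1 + m) :=
  let p := nat_of_ord ((x.2^-1)%g i) in
  let t := graft (proj1_sig x.1) p (proj1_sig y.1) in
  (match leaves t =P n.-1 + m with
   | ReflectT e => exist _ t (introT eqP e)
   | ReflectF _ => comb_n (n.-1 + m) end,
   word_comp x.2 i y.2).

Definition free_op (G : finGroupType) : goperad G :=
  @GOperad G free_el free_sact (fun n _ x => x) free_unit free_comp.

(* SM_empty = ~F(S),  eps^*P = ~Sigma_bullet (trivial G-action) *)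

(* Main.v *)
Require Import Defs.
From mathcomp Require Import all_boot all_fingroup gproduct.
From mathcomp Require Import zify.
Set Implicit Arguments. Unset Strict Implicit. Unset Printing Implicit Defensive.

Definition adj (m i a : nat) := if a < i then a else (a + m - 1)%N.

Definition gen (W V : nat -> nat) (m i p q : nat) : nat :=
  if q < p then adj m i (W q) else if q < p + m then i + V (q - p)
  else adj m i (W (q + 1 - m)%N).

Lemma adj_inj m i a b : a <> i -> b <> i -> adj m i a = adj m i b -> a = b.
Proof. rewrite /adj; case: ifP; case: ifP; lia. Qed.

Lemma adj_out m i a v : a <> i -> v < m -> adj m i a <> i + v.
Proof. rewrite /adj; case: ifP; lia. Qed.

Lemma gen_inj W V n m i p q1 q2 : i < n -> p < n -> W p = i ->
  (forall k1 k2, k1 < n -> k2 < n -> W k1 = W k2 -> k1 = k2) ->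
  (forall k, k < m -> V k < m) ->
  (forall k1 k2, k1 < m -> k2 < m -> V k1 = V k2 -> k1 = k2) ->
  q1 < n.-1 + m -> q2 < n.-1 + m ->
  gen W V m i p q1 = gen W V m i p q2 -> q1 = q2.
Proof.
move=> hi hp hW Wi Vl Vi h1 h2.
have Wne : forall k, k < n -> k <> p -> W k <> i.
  by move=> k hk hkp e; apply: hkp; apply: Wi => //; rewrite hW.
rewrite /gen.
case: (ltnP q1 p) => a1; [|case: (ltnP q1 (p+m)) => b1];
(case: (ltnP q2 p) => a2; [|case: (ltnP q2 (p+m)) => b2]).
- move/adj_inj => /(_ (Wne q1 ltac:(lia) ltac:(lia)) (Wne q2 ltac:(lia) ltac:(lia))).
  move/Wi; move=> /(_ ltac:(lia) ltac:(lia)); lia.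
- move=> e; exfalso; exact: (@adj_out _ _ _ _ (Wne q1 ltac:(lia) ltac:(lia)) (Vl (q2-p) ltac:(lia)) e).
- move/adj_inj => /(_ (Wne q1 ltac:(lia) ltac:(lia)) (Wne (q2+1-m) ltac:(lia) ltac:(lia))).
  move/Wi; move=> /(_ ltac:(lia) ltac:(lia)); lia.
- move=> e; exfalso; exact: (@adj_out _ _ _ _ (Wne q2 ltac:(lia) ltac:(lia)) (Vl (q1-p) ltac:(lia)) (esym e)).
- move/addnI/Vi => /(_ ltac:(lia) ltac:(lia)); lia.
- move=> e; exfalso; exact: (@adj_out _ _ _ _ (Wne (q2+1-m) ltac:(lia) ltac:(lia)) (Vl (q1-p) ltac:(lia)) (esym e)).
- move/adj_inj => /(_ (Wne (q1+1-m) ltac:(lia) ltac:(lia)) (Wne q2 ltac:(lia) ltac:(lia))).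
  move/Wi; move=> /(_ ltac:(lia) ltac:(lia)); lia.
- move=> e; exfalso; exact: (@adj_out _ _ _ _ (Wne (q1+1-m) ltac:(lia) ltac:(lia)) (Vl (q2-p) ltac:(lia)) e).
- move/adj_inj => /(_ (Wne (q1+1-m) ltac:(lia) ltac:(lia)) (Wne (q2+1-m) ltac:(lia) ltac:(lia))).
  move/Wi; move=> /(_ ltac:(lia) ltac:(lia)); lia.
Qed.
Lemma gen_lt W V n m i p q : i < n -> p < n -> W p = i ->
  (forall k, k < n -> W k < n) ->
  (forall k, k < m -> V k < m) ->
  q < n.-1 + m -> gen W V m i p q < n.-1 + m.
Proof.
move=> hi hp hW Wl Vl hq; rewrite /gen.
have := Wl q; have := Wl (q+1-m); have := Vl (q-p).
rewrite /adj; case: ifP => h1; first by case: ifP => h; lia.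
case: ifP => h2; first lia.
case: ifP => h; lia.
Qed.
Lemma gen_rev W V W' V' n m i p q : p < n ->
  (forall k, k < n -> W' k = W (n - 1 - k)) ->
  (forall k, k < m -> V' k = V (m - 1 - k)) ->
  q < n.-1 + m ->
  gen W' V' m i (n - 1 - p) q = gen W V m i p (n.-1 + m - 1 - q).
Proof.
move=> hp hW hV hq; rewrite /gen.
case: (ltnP q (n-1-p)) => a.
  rewrite hW; last lia.
  have -> : (n.-1 + m - 1 - q < p) = false by lia.
  have -> : (n.-1 + m - 1 - q < p + m) = false by lia.
  by have -> : (n.-1 + m - 1 - q + 1 - m = n - 1 - q)%N by lia.
case: (ltnP q (n-1-p+m)) => b.
  rewrite hV; last lia.
  have -> : (n.-1 + m - 1 - q < p) = false by lia.
  have -> : (n.-1 + m - 1 - q < p + m) = true by lia.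
  by have -> : (m - 1 - (q - (n - 1 - p)) = n.-1 + m - 1 - q - p)%N by lia.
rewrite hW; last lia.
have -> : (n.-1 + m - 1 - q < p) = true by lia.
by have -> : (n - 1 - (q + 1 - m) = n.-1 + m - 1 - q)%N by lia.
Qed.

Definition fw n (w : 'S_n) (k : nat) : nat :=
  if insub k is Some k' then nat_of_ord (w k') else 0.

Lemma fwE n (w : 'S_n) k (hk : k < n) : fw w k = w (Ordinal hk).
Proof. by rewrite /fw insubT. Qed.

Lemma fw_lt n (w : 'S_n) k : k < n -> fw w k < n.
Proof. by move=> hk; rewrite (fwE w hk). Qed.

Lemma fw_inj n (w : 'S_n) k1 k2 : k1 < n -> k2 < n -> fw w k1 = fw w k2 -> k1 = k2.
Proof.
move=> h1 h2; rewrite (fwE w h1) (fwE w h2) => /val_inj /perm_inj.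
by move/(congr1 val).
Qed.

Lemma fw_ord n (w : 'S_n) (j : 'I_n) : fw w j = w j.
Proof. by rewrite (fwE w (ltn_ord j)); congr (nat_of_ord (w _)); apply: ord_inj. Qed.

Lemma fw_inv n (w : 'S_n) (i : 'I_n) : fw w ((w^-1)%g i) = i.
Proof. by rewrite fw_ord permKV. Qed.

Lemma wcf_gen n m (w : 'S_n) (i : 'I_n) (v : 'S_m) q :
  word_comp_fun w i v q = gen (fw w) (fw v) m i ((w^-1)%g i) q.
Proof. by []. Qed.

Lemma wcf_lt n m (w : 'S_n) (i : 'I_n) (v : 'S_m) q :
  q < n.-1 + m -> word_comp_fun w i v q < n.-1 + m.
Proof.
rewrite wcf_gen; apply: (gen_lt (n := n)) => //; first exact: fw_inv.
- by move=> k; apply: fw_lt.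
- by move=> k; apply: fw_lt.
Qed.

Lemma wcf_inj n m (w : 'S_n) (i : 'I_n) (v : 'S_m) q1 q2 :
  q1 < n.-1 + m -> q2 < n.-1 + m ->
  word_comp_fun w i v q1 = word_comp_fun w i v q2 -> q1 = q2.
Proof.
rewrite !wcf_gen; apply: (gen_inj (n := n)) => //; first exact: fw_inv.
- by move=> k1 k2; apply: fw_inj.
- by move=> k; apply: fw_lt.
- by move=> k1 k2; apply: fw_inj.
Qed.

Lemma word_compE n m (w : 'S_n) (i : 'I_n) (v : 'S_m) (q : 'I_(n.-1 + m)) :
  (word_comp w i v q : nat) = word_comp_fun w i v q.
Proof.
pose f : {ffun 'I_(n.-1 + m) -> 'I_(n.-1 + m)} :=
  [ffun q : 'I_(n.-1 + m) => insubd q (word_comp_fun w i v q)].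
have fE : forall q, (f q : nat) = word_comp_fun w i v q.
  by move=> q'; rewrite ffunE insubdK //; apply: wcf_lt.
have injf : injectiveb f.
  apply/injectiveP => q1 q2 e; apply: ord_inj.
  have e' : word_comp_fun w i v q1 = word_comp_fun w i v q2 by rewrite -!fE e.
  exact: (wcf_inj (ltn_ord q1) (ltn_ord q2) e').
rewrite /word_comp -/f -pvalE insubdK //.
Qed.

Definition revp n : 'S_n := perm (@rev_ord_inj n).

Lemma revpE n (x : 'I_n) : (revp n x : nat) = (n - x.+1)%N.
Proof. by rewrite permE. Qed.

Lemma revpV n : ((revp n)^-1)%g = revp n.
Proof.
apply/permP => x; apply: (@perm_inj _ (revp n)); rewrite permKV; apply: ord_inj.
rewrite !revpE; have := ltn_ord x; lia.
Qed.

Lemma fw_rev n (w : 'S_n) k : k < n -> fw (revp n * w)%g k = fw w (n - 1 - k).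
Proof.
move=> hk; have hk' : (n - 1 - k < n)%N by lia.
rewrite (fwE _ hk) (fwE w hk') permM; congr (nat_of_ord (w _)); apply: ord_inj.
rewrite revpE /=; lia.
Qed.

Lemma word_comp_rev n m (w : 'S_n) (i : 'I_n) (v : 'S_m) :
  word_comp (revp n * w)%g i (revp m * v)%g = (revp _ * word_comp w i v)%g.
Proof.
apply/permP => q; apply: ord_inj; rewrite permM !word_compE !wcf_gen.
rewrite invMg permM revpV revpE.
have := ltn_ord q; have := ltn_ord ((w^-1)%g i) => hp hq.
have -> : (n - ((w^-1)%g i).+1 = n - 1 - (w^-1)%g i)%N by lia.
rewrite (gen_rev _ hp (fun k => @fw_rev n w k) (fun k => @fw_rev m v k) hq).
congr gen; rewrite revpE; lia.
Qed.

Lemma revp1 : revp 1 = 1%g.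
Proof. by apply/permP => x; rewrite perm1 !ord1. Qed.

Definition opmap1 (G : finGroupType) : opmap (free_op G) (assoc_op G).
Proof.
refine (@OpMap G (free_op G) (assoc_op G)
  (fun n => chaotic_functor (X := free_el n) (Y := 'S_n) (fun x => x.2)) _ _ _ _) => //.
Defined.

Definition opmap2 (G : finGroupType) : opmap (free_op G) (assoc_op G).
Proof.
refine (@OpMap G (free_op G) (assoc_op G)
  (fun n => chaotic_functor (X := free_el n) (Y := 'S_n) (fun x => revp n * x.2)%g) _ _ _ _) => //.
- by move=> n x s; rewrite /= /perm_sact mulgA.
- by rewrite /= revp1 mulg1.
- by move=> n m x i y; rewrite /= word_comp_rev.
Defined.

Lemma unit_eq (a b : unit) : a = b. Proof. by case: a; case: b. Qed.

Unset Implicit Arguments.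
Theorem proposition4p15 (G : finGroupType) :
  (exists F1 F2 : opmap (free_op G) (assoc_op G),
      exists n (x : op (free_op G) n), opm F1 n x <> opm F2 n x)
  /\ (forall F : opmap (free_op G) (assoc_op G),
        forall n (L : {group (G * 'S_n)%type}),
          is_equivalence (fixed_functor F (L : {set G * 'S_n}))).
Proof.
split.
  exists (opmap1 G), (opmap2 G), 2, (comb_n 2, 1%g) => /= /(congr1 (fun s : 'S_2 => nat_of_ord (s ord0))).
  by rewrite mulg1 revpE perm1.
move=> F n L.
have fx : forall y : fixed_pts (assoc_op G) (L : {set G * 'S_n}),
    is_fixed (free_op G) (L : {set G * 'S_n}) (comb_n n, 1%g).
  move=> [y hy] l hl; have := hy l hl; rewrite /gsact /= /perm_sact /free_sact /= => e.
  have -> : (((l.2)^-1)%g = 1%g).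
    by move/(congr1 (mulg y^-1)): e; rewrite !mulgA mulVg mul1g.
  by rewrite mulg1.
exists (chaotic_functor (X := fixed_pts (assoc_op G) (L : {set G * 'S_n}))
          (Y := fixed_pts (free_op G) (L : {set G * 'S_n}))
          (fun y => exist _ (comb_n n, 1%g) (fx y))).
split; exists (fun _ => tt), (fun _ => tt); split => *; exact: unit_eq.
Qed.
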